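(* Let $(x_k)$ be a sequence in a Banach space $X$ which weakly converges to some $x\in X$. Then $\operatorname{cca}(x_k)\le 2\operatorname{wu}(x_k)$.
   Context: $\operatorname{ca}(y_k)=\inf_{n}\sup\{\|y_k-y_l\|: k,l\ge n\}$ and $\operatorname{cca}(x_k)=\operatorname{ca}(\frac1k\sum_{i=1}^k x_i)$. For $(x_k)$ weakly converging to $x$, $\operatorname{wu}(x_k)$ is the infimum of all $\varepsilon>0$ such that there exists $n\in\mathbb N$ with $\#\{k\in\mathbb N:|x^*(x_k-x)|>\varepsilon\}\le n$ for all $x^*\in B_{X^*}$. *)

(* Defs.v *)
From HB Require Import structures.
From mathcomp Require Import all_boot all_order all_algebra.
From mathcomp Require Import all_classical all_reals all_analysis.
Set Implicit Arguments. Unset Strict Implicit. Unset Printing Implicit Defensive.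
Import Order.TTheory GRing.Theory Num.Theory.
Import numFieldNormedType.Exports.
Local Open Scope classical_set_scope.
Local Open Scope ring_scope.
Local Open Scope card_scope.

Definition dual_elt (R : realType) (X : normedModType R) (f : {linear X -> R^o}) :=
  continuous (f : X -> R).

Definition dual_ball (R : realType) (X : normedModType R) (f : {linear X -> R^o}) :=
  dual_elt f /\ forall y : X, `|f y| <= `|y|.

Definition weak_cvg (R : realType) (X : normedModType R) (x_ : nat -> X) (x : X) :=
  forall f : {linear X -> R^o}, dual_elt f ->
    (fun k => f (x_ k)) @ \oo --> (f x : R^o).

Definition ca (R : realType) (X : normedModType R) (y_ : nat -> X) : \bar R :=
  ereal_inf [set ereal_sup [set r | exists k l : nat,
                 [/\ (n <= k)%N, (n <= l)%N & r = (`|y_ k - y_ l|)%:E]]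
            | n in [set: nat]].

(* Cesaro means: the k-th term (k >= 1) is (1/k) sum_{i=1}^k x_i;
   with 0-based indexing the (k)-th term is (1/(k+1)) sum_{i<k+1} x_i. *)
Definition cesaro (R : realType) (X : normedModType R) (x_ : nat -> X) : nat -> X :=
  fun k => (k.+1%:R)^-1 *: \sum_(i < k.+1) x_ i.

Definition cca (R : realType) (X : normedModType R) (x_ : nat -> X) : \bar R :=
  ca (cesaro x_).

Definition wu (R : realType) (X : normedModType R) (x_ : nat -> X) (x : X) : \bar R :=
  ereal_inf [set eps%:E | eps in [set eps : R | 0 < eps /\
     exists n : nat, forall f : {linear X -> R^o}, dual_ball f ->
       [set k | eps < `|f (x_ k - x)|] #<= `I_n]].

(* Main.v *)
Require Import Defs.
From HB Require Import structures.
From mathcomp Require Import all_boot all_order all_algebra.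
From mathcomp Require Import all_classical all_reals all_analysis.
From mathcomp Require Import ring lra.
Import numFieldNormedType.Exports.
Set Implicit Arguments. Unset Strict Implicit. Unset Printing Implicit Defensive.
Import Order.TTheory GRing.Theory Num.Theory.
Local Open Scope ring_scope.
Local Open Scope classical_set_scope.
Local Open Scope card_scope.

Section Aux.
Variables (R : realType) (X : normedModType R).

Definition mklin (f : X -> R^o) (lf : linear f) : {linear X -> R^o} :=
  HB.pack f (GRing.isLinear.Build _ _ _ _ _ lf).

Lemma mklinE (f : X -> R^o) (lf : linear f) v : mklin lf v = f v.
Proof. by []. Qed.

Lemma lin_cont (f : {linear X -> R^o}) (C : R) :
  (forall v, `|f v| <= C * `|v|) -> dual_elt f.
Proof.
move=> fC; rewrite /dual_elt; apply: linear_continuous.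
apply/(proj1 (bounded_landau f)) => r.
exists (`|C| * `|r|) => v vr.
apply: (le_trans (fC v)); apply: (le_trans (ler_norm _)).
rewrite normrM normr_id ler_wpM2l //; exact: (le_trans vr (ler_norm _)).
Qed.

Lemma card_seq (A : set nat) n (s : seq nat) :
  A #<= `I_n -> uniq s -> (forall i, i \in s -> A i) -> (size s <= n)%N.
Proof.
move=> H; have := (@pcard_leP _ _ A `I_n H).
move=> /injfunPex [f fA finj] us sA.
have -> : size s = size (map f s) by rewrite size_map.
have um : uniq (map f s).
  rewrite map_inj_in_uniq // => i j /sA Ai /sA Aj.
  exact: finj (mem_set Ai) (mem_set Aj).
rewrite -(size_iota 0 n); apply: uniq_leq_size => // y.
move=> /mapP [i /sA Ai ->]; rewrite mem_iota /= add0n.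
exact: (fA i Ai).
Qed.

Definition gsub (G : set (X * R)) :=
  [/\ G (0, 0),
      (forall u a v b, G (u, a) -> G (v, b) -> G (u + v, a + b)),
      (forall t u a, G (u, a) -> G (t *: u, t * a)) &
      (forall u a, G (u, a) -> a <= `|u|)].

Lemma gsub_uniq G u a b : gsub G -> G (u, a) -> G (u, b) -> a = b.
Proof.
case=> _ Gadd Gsc Gdom Ga Gb.
have H1 : a - b <= 0.
  have := Gdom _ _ (Gadd _ _ _ _ Ga (Gsc (-1) _ _ Gb)).
  by rewrite scaleN1r subrr normr0 mulN1r.
have H2 : b - a <= 0.
  have := Gdom _ _ (Gadd _ _ _ _ Gb (Gsc (-1) _ _ Ga)).
  by rewrite scaleN1r subrr normr0 mulN1r.
apply/eqP; rewrite eq_le; apply/andP; split; rewrite -subr_le0 //.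
Qed.

Lemma scale_norm (t : R) (u z : X) : t != 0 ->
  `|t| * `|t^-1 *: u + z| = `|u + t *: z|.
Proof.
move=> t0; rewrite -normrZ scalerDr scalerA mulfV // scale1r //.
Qed.

Lemma gsub_ext G z : gsub G ->
  exists H, [/\ gsub H, G `<=` H & exists c, H (z, c)].
Proof.
case=> G0 Gadd Gsc Gdom.
pose S := [set r | exists w a, G (w, a) /\ r = a - `|w - z|].
have S0 : S (0 - `|0 - z|) by exists 0, 0.
have Sub : ubound S `|z|.
  move=> r [w [a [Gwa ->]]]; rewrite lerBlDr.
  apply: (le_trans (Gdom _ _ Gwa)).
  by rewrite addrC (le_trans _ (ler_normD (w - z) z)) // subrK.
have hs : has_sup S by split; [exists (0 - `|0 - z|) | exists `|z|].
set c := sup S.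
have cup w b : G (w, b) -> b - `|w - z| <= c.
  by move=> Gwb; apply: sup_upper_bound => //; exists w, b.
have clo u a : G (u, a) -> c <= `|u + z| - a.
  move=> Gua; apply: ge_sup; first by exists (0 - `|0 - z|).
  move=> r [w [b [Gwb ->]]].
  rewrite lerBrDr addrAC lerBlDr.
  apply: (le_trans (Gdom _ _ (Gadd _ _ _ _ Gwb Gua))).
  have -> : w + u = (w - z) + (u + z) by rewrite addrACA addNr addr0.
  rewrite [X in _ <= X]addrC; exact: ler_normD.
pose H := [set q | exists u a t, G (u, a) /\ q = (u + t *: z, a + t * c)].
exists H; split.
- split.
  + by exists 0, 0, 0; split => //; rewrite scale0r mul0r !addr0.
  + move=> v b v' b' [u [a [t [Gua [-> ->]]]]] [u' [a' [t' [Gua' [-> ->]]]]].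
    exists (u + u'), (a + a'), (t + t'); split; first exact: Gadd.
    by rewrite scalerDl mulrDl !addrA; congr (_, _); rewrite -!addrA;
      congr (_ + _); rewrite addrCA.
  + move=> s v b [u [a [t [Gua [-> ->]]]]].
    exists (s *: u), (s * a), (s * t); split; first exact: Gsc.
    by rewrite scalerDr scalerA mulrDr mulrA.
  + move=> v b [u [a [t [Gua [-> ->]]]]].
    case: (ltgtP t 0) => [tlt0|tgt0|->]; last first.
    * by rewrite scale0r mul0r !addr0; exact: Gdom.
    * have t0 : t != 0 by rewrite gt_eqF.
      have := clo _ _ (Gsc t^-1 _ _ Gua).
      have e : t * `|t^-1 *: u + z| = `|u + t *: z|.
        by rewrite -scale_norm // gtr0_norm.
      rewrite -(ler_pM2l tgt0) mulrBr e mulrA mulfV // mul1r.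
      by rewrite lerBrDl addrC.
    * set s := - t.
      have sgt0 : 0 < s by rewrite oppr_gt0.
      have s0 : s != 0 by rewrite gt_eqF.
      have := cup _ _ (Gsc s^-1 _ _ Gua).
      have e : s * `|s^-1 *: u - z| = `|u + t *: z|.
        have -> : s^-1 *: u - z = s^-1 *: u + (-1) *: z by rewrite scaleN1r.
        have := scale_norm u ((-1) *: z) s0; rewrite gtr0_norm // => ->.
        by rewrite scalerA mulrN1 /s opprK.
      rewrite -(ler_pM2l sgt0) mulrBr mulrA mulfV // mul1r e.
      rewrite lerBlDr => h.
      by rewrite -lerBrDr -mulNr addrC; exact: h.
- move=> [u a] Gua; exists u, a, 0; split => //.
  by rewrite scale0r mul0r !addr0.
- exists c, 0, 0, 1; split => //.
  by rewrite scale1r mul1r !add0r.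
Qed.


Lemma gsub_directed (U : set (X * R)) : U (0, 0) ->
  (forall q1 q2, U q1 -> U q2 ->
     exists Y, [/\ gsub Y, Y `<=` U, Y q1 & Y q2]) -> gsub U.
Proof.
move=> U0 dir; split => //.
- move=> u a v b Ua Ub; have [Y [[_ Yadd _ _] YU Y1 Y2]] := dir _ _ Ua Ub.
  by apply: YU; apply: Yadd.
- move=> t u a Ua; have [Y [[_ _ Ysc _] YU Y1 _]] := dir _ _ Ua Ua.
  by apply: YU; apply: Ysc.
- move=> u a Ua; have [Y [[_ _ _ Ydom] YU Y1 _]] := dir _ _ Ua Ua.
  exact: Ydom.
Qed.

Lemma norming (y : X) :
  exists f : {linear X -> R^o}, dual_ball f /\ f y = `|y|.
Proof.
pose G0 := [set q | exists t : R, q = (t *: y, t * `|y|)].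
have gG0 : gsub G0.
  split.
  - by exists 0; rewrite scale0r mul0r.
  - move=> u a v b [t [-> ->]] [t' [-> ->]]; exists (t + t').
    by rewrite scalerDl mulrDl.
  - move=> s u a [t [-> ->]]; exists (s * t).
    by rewrite scalerA mulrA.
  - move=> u a [t [-> ->]]; rewrite normrZ ler_wpM2r //; exact: ler_norm.
pose P (A : set (X * R)) := gsub (A `|` G0).
have [A [PA maxA]] : exists A, P A /\ forall B, A `<` B -> ~ P B.
  apply: Zorn_bigcup => F FP Ftot.
  apply: gsub_directed; first by right; case: gG0.
  move=> q1 q2 [[A1 FA1 A1q1]|G0q1] [[A2 FA2 A2q2]|G0q2].
  - have [A12|A21] := Ftot _ _ FA1 FA2.
    + exists (A2 `|` G0); split; first exact: (FP _ FA2).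
      * by move=> q [Aq|Gq]; [left; exists A2|right].
      * by left; apply: A12.
      * by left.
    + exists (A1 `|` G0); split; first exact: (FP _ FA1).
      * by move=> q [Aq|Gq]; [left; exists A1|right].
      * by left.
      * by left; apply: A21.
  - exists (A1 `|` G0); split; first exact: (FP _ FA1).
    * by move=> q [Aq|Gq]; [left; exists A1|right].
    * by left.
    * by right.
  - exists (A2 `|` G0); split; first exact: (FP _ FA2).
    * by move=> q [Aq|Gq]; [left; exists A2|right].
    * by right.
    * by left.
  - exists G0; split => //; by move=> q Gq; right.
set G := A `|` G0.
have gG : gsub G by [].
have full z : exists a, G (z, a).
  have [//|nz] := pselect (exists a, G (z, a)).
  have [H [gH GH [c Hc]]] := gsub_ext z gG.
  exfalso; apply: (maxA H).
  - split; first by move=> q Aq; apply: GH; left.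
    move=> HA; apply: nz; exists c; left; exact: HA.
  - rewrite /P; have -> : H `|` G0 = H.
      apply/seteqP; split => q; first by case=> // Gq; apply: GH; right.
      by move=> Hq; left.
    exact: gH.
pose f (z : X) : R^o := proj1_sig (cid (full z)).
have fG z : G (z, f z) by rewrite /f; case: cid.
have [_ Gadd Gsc Gdom] := gG.
have lf : linear f.
  move=> t u v; apply: (gsub_uniq gG (fG _)).
  by apply: Gadd; [apply: Gsc|]; apply: fG.
have fb v : `|f v| <= `|v|.
  rewrite ler_norml; apply/andP; split; last exact: Gdom.
  have := Gdom _ _ (Gsc (-1) _ _ (fG v)).
  by rewrite scaleN1r normrN mulN1r lerNl.
exists (mklin lf); split; first split.
- apply: (@lin_cont _ 1) => v; rewrite mul1r; exact: fb.
- exact: fb.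
- rewrite mklinE; apply: (gsub_uniq gG (fG y)).
  by right; exists 1; rewrite scale1r mul1r.
Qed.

Lemma seq_bounded (a : nat -> R^o) (l : R^o) : a @ \oo --> l ->
  exists M, forall k, `|a k| <= M.
Proof.
move=> h; have : cvgn a by apply/cvg_ex; exists l.
move=> /cvg_seq_bounded [M0 [_ HM]]; exists (M0 + 1) => k.
have := HM (M0 + 1); rewrite ltrDl ltr01 => /(_ isT).
by move=> /(_ k I).
Qed.

Lemma le_sumn (s : seq nat) i : i \in s -> (i <= sumn s)%N.
Proof.
elim: s => //= a s IH; rewrite in_cons => /orP [/eqP ->|/IH]; first exact: leq_addr.
by move/leq_trans; apply; exact: leq_addl.
Qed.

Lemma term_le_sum (s : seq nat) (F : nat -> R) i : uniq s ->
  (forall j, 0 <= F j) -> i \in s -> F i <= \sum_(j <- s) F j.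
Proof.
move=> us F0 si; rewrite (bigD1_seq i) //= lerDl.
by apply: sumr_ge0 => j _.
Qed.

Lemma bnd (x_ : nat -> X) (x : X) (eps : R) (n : nat) :
  weak_cvg x_ x -> 0 < eps ->
  (forall f : {linear X -> R^o}, dual_ball f ->
     [set k | eps < `|f (x_ k - x)|] #<= `I_n) ->
  exists M, forall f : {linear X -> R^o}, dual_ball f ->
    forall i, `|f (x_ i - x)| <= M.
Proof.
move=> wc eps0 cnt.
pose z i := x_ i - x.
have [//|nb] := pselect (exists M, forall f : {linear X -> R^o}, dual_ball f ->
    forall i, `|f (x_ i - x)| <= M).
have nb' T K : exists (f : {linear X -> R^o}) i,
    [/\ dual_ball f, (K < i)%N & T < `|f (z i)|].
  pose M := `|T| + \sum_(j < K.+1) `|z j|.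
  have [[f [i [bf Mi]]]|no] := pselect (exists (f : {linear X -> R^o}) i,
      dual_ball f /\ M < `|f (z i)|); last first.
    exfalso; apply: nb; exists M => f bf i; rewrite leNgt; apply/negP => h.
    by apply: no; exists f, i.
  exists f, i; split => //.
  - rewrite ltnNge; apply/negP => iK.
    move: Mi; apply/negP; rewrite -leNgt.
    apply: (le_trans (proj2 bf _)).
    rewrite /M (bigD1 (Ordinal (iK : (i < K.+1)%N))) //= addrCA lerDl.
    by rewrite addr_ge0 // sumr_ge0.
  - apply: le_lt_trans Mi; rewrite /M; apply: (le_trans (ler_norm T)).
    by rewrite lerDl; apply: sumr_ge0.
have step m : exists (h : {linear X -> R^o}) (rho : R) (s : seq nat),
   [/\ dual_elt h, 0 <= rho < 1, (forall v, `|h v| <= rho * `|v|),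
       uniq s & size s = m /\ (forall i, i \in s -> eps < `|h (z i)|)].
  elim: m => [|m [h [rho [s [hc r01 hb us [ss Hs]]]]]].
    have l0 : linear (fun _ : X => (0 : R^o)).
      by move=> t u v; rewrite scaler0 addr0.
    exists (mklin l0), 0, [::]; split.
    - by apply: (@lin_cont _ 0) => v; rewrite mul0r mklinE normr0.
    - by rewrite lexx ltr01.
    - by move=> v; rewrite mul0r mklinE normr0.
    - by [].
    - by [].
  move/andP: r01 => [r0 r1].
  pose d i := `|h (z i)| - eps.
  have d0 i : i \in s -> 0 < d i by move=> /Hs; rewrite subr_gt0.
  pose Q := \sum_(j <- s) (`|z j| / `|d j|).
  have Q0 : 0 <= Q by apply: sumr_ge0 => j _; rewrite divr_ge0.
  pose c := (1 - rho) / (2 * (1 + Q)).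
  have Q1 : 0 < 1 + Q by lra.
  have c0 : 0 < c by rewrite /c divr_gt0 // ?mulr_gt0 //; lra.
  have cQ : c * (1 + Q) = (1 - rho) / 2.
    by rewrite /c; field; rewrite gt_eqF.
  have cle : c <= c * (1 + Q) by rewrite ler_peMr //; lra.
  have cs j : j \in s -> c * `|z j| < d j.
    move=> js; have dj := d0 _ js.
    have : `|z j| / `|d j| <= Q.
      by apply: (@term_le_sum s (fun j => `|z j| / `|d j|)) => // k; rewrite divr_ge0.
    rewrite (gtr0_norm dj) ler_pdivrMr // => h1.
    have h2 : c * `|z j| <= c * (Q * d j) by rewrite ler_pM2l.
    have h3 : c * Q < 1 by nra.
    have h4 : c * (Q * d j) < d j by rewrite mulrA gtr_pMl.
    exact: le_lt_trans h2 h4.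
  have [B HB] := seq_bounded (wc h hc).
  pose B' := B + `|h x|.
  have hzB k : `|h (z k)| <= B'.
    rewrite /z linearB /=; apply: (le_trans (ler_normB _ _)).
    by rewrite lerD2r.
  pose K := sumn s.
  pose T := (eps + B') / c.
  have [f [i [bf Ki Ti]]] := nb' T K.
  have lf : linear (fun v => h v + c * f v).
    move=> t u v /=; rewrite !linearP /=.
    have E (a b : R^o) : a *: b = a * b by [].
    rewrite !E; ring.
  exists (mklin lf), (rho + c), (i :: s); split.
  - apply: (@lin_cont _ (rho + c)) => v; rewrite mklinE.
    apply: (le_trans (ler_normD _ _)); rewrite mulrDl lerD //.
    by rewrite normrM gtr0_norm // ler_pM2l //; case: bf.
  - apply/andP; split; lra.
  - move=> v; rewrite mklinE.
    apply: (le_trans (ler_normD _ _)); rewrite mulrDl lerD //.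
    by rewrite normrM gtr0_norm // ler_pM2l //; case: bf.
  - rewrite /= us andbT; apply/negP => /le_sumn; rewrite -/K leqNgt Ki //.
  - split; first by rewrite /= ss.
    move=> j; rewrite in_cons => /orP [/eqP ->|js]; rewrite mklinE.
    + have e1 : c * `|f (z i)| <= `|h (z i) + c * f (z i)| + `|h (z i)|.
        have := ler_normB (h (z i) + c * f (z i)) (h (z i)).
        rewrite (_ : h (z i) + c * f (z i) - h (z i) = c * f (z i)); last by ring.
        by rewrite normrM gtr0_norm.
      have e2 : c * T = eps + B' by rewrite /T mulrC divfK // gt_eqF.
      have e3 : c * T < c * `|f (z i)| by rewrite ltr_pM2l.
      have := hzB i; lra.
    + have e1 : `|h (z j)| <= `|h (z j) + c * f (z j)| + c * `|f (z j)|.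
        have := ler_normB (h (z j) + c * f (z j)) (c * f (z j)).
        rewrite (_ : h (z j) + c * f (z j) - c * f (z j) = h (z j)); last by ring.
        by rewrite normrM (gtr0_norm c0).
      have e2 : c * `|f (z j)| <= c * `|z j| by rewrite ler_pM2l //; case: bf.
      have := cs j js; rewrite /d; lra.
have [h [rho [s [hc /andP [r0 r1] hb us [ss Hs]]]]] := step n.+1.
have bh : dual_ball h.
  split => // v; apply: (le_trans (hb v)).
  by rewrite ler_piMl // ltW.
have := card_seq (cnt _ bh) us Hs.
by rewrite ss ltnn.
Qed.

Lemma cesaro_sub (x_ : nat -> X) x k :
  Defs.cesaro x_ k - x = (k.+1%:R)^-1 *: \sum_(i < k.+1) (x_ i - x).
Proof.
rewrite /Defs.cesaro sumrB sumr_const card_ord scalerBr -[x *+ _]scaler_nat scalerA.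
by rewrite mulVf ?scale1r // pnatr_eq0.
Qed.

Lemma cnt_ord (A : set nat) n k (P : {pred 'I_k.+1}) :
  A #<= `I_n -> (forall i, P i -> A i) -> (#|P| <= n)%N.
Proof.
move=> An PA.
have := @card_seq A n (map val (enum P)) An.
rewrite size_map -cardE; apply.
  by rewrite map_inj_uniq ?enum_uniq //; exact: val_inj.
by move=> i /mapP [j]; rewrite mem_enum => Pj ->; exact: PA.
Qed.

Lemma yk_bound (x_ : nat -> X) (x : X) (eps M : R) (n k : nat) :
  0 < eps ->
  (forall f : {linear X -> R^o}, dual_ball f ->
     [set k | eps < `|f (x_ k - x)|] #<= `I_n) ->
  (forall f : {linear X -> R^o}, dual_ball f ->
    forall i, `|f (x_ i - x)| <= M) ->
  `|Defs.cesaro x_ k - x| <= eps + n%:R * `|M| / k.+1%:R.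
Proof.
move=> eps0 cnt HM.
have [g [gb ge]] := norming (Defs.cesaro x_ k - x).
have E (a b : R^o) : a *: b = a * b by [].
rewrite -ge cesaro_sub linearZ /= raddf_sum E.
have S : \sum_(i < k.+1) g (x_ i - x) <= k.+1%:R * eps + n%:R * `|M|.
  apply: (@le_trans _ _ (\sum_(i < k.+1) `|g (x_ i - x)|)).
    by apply: ler_sum => i _; exact: ler_norm.
  rewrite (bigID (fun i : 'I_k.+1 => eps < `|g (x_ i - x)|)) /= addrC.
  apply: lerD.
    rewrite big_mkcond /=.
    apply: (@le_trans _ _ (\sum_(i < k.+1) eps)).
      apply: ler_sum => i _; case: ifP; first by rewrite -leNgt.
      by move=> _; apply: ltW.
    by rewrite sumr_const card_ord mulr_natl.
  apply: (@le_trans _ _ (\sum_(i < k.+1 | eps < `|g (x_ i - x)|) `|M|)).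
    apply: ler_sum => i _; apply: (le_trans (HM g gb i)); exact: ler_norm.
  rewrite sumr_const -[_ *+ #|_|]mulr_natr [n%:R * _]mulrC.
  apply: ler_wpM2l => //.
  by rewrite ler_nat; apply: (cnt_ord (cnt g gb)).
rewrite -(ler_pM2l (_ : 0 < k.+1%:R)) // mulrA mulfV ?pnatr_eq0 // mul1r.
by rewrite mulrDr mulrCA mulfV ?pnatr_eq0 // mulr1.
Qed.

Lemma cca_le (x_ : nat -> X) (x : X) (eps : R) (n : nat) :
  weak_cvg x_ x -> 0 < eps ->
  (forall f : {linear X -> R^o}, dual_ball f ->
     [set k | eps < `|f (x_ k - x)|] #<= `I_n) ->
  (cca x_ <= (2 * eps)%:E)%E.
Proof.
move=> wc eps0 cnt.
have [M HM] := bnd wc eps0 cnt.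
pose A := n%:R * `|M|.
have A0 : 0 <= A by rewrite /A mulr_ge0.
apply/lee_addgt0Pr => d d0.
pose N := Num.Def.trunc (2 * A / d).
have hN : 2 * A / d < N.+1%:R := truncnS_gt _.
have key k : (N <= k)%N -> `|Defs.cesaro x_ k - x| <= eps + d / 2.
  move=> Nk; apply: (le_trans (yk_bound k eps0 cnt HM)); rewrite lerD2l.
  apply: (@le_trans _ _ (A / N.+1%:R)).
    by apply: ler_wpM2l => //; rewrite lef_pV2 ?posrE ?ltr0n // ler_nat.
  rewrite ler_pdivrMr ?ltr0n //.
  move: hN; rewrite ltr_pdivrMr // => hN.
  nra.
rewrite /cca /ca.
apply: (@le_trans _ _ (ereal_sup [set r | exists k l : nat,
   [/\ (N <= k)%N, (N <= l)%N & r = (`|Defs.cesaro x_ k - Defs.cesaro x_ l|)%:E]])).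
  by apply: ereal_inf_lbound; exists N.
apply: ge_ereal_sup => r [k [l [Nk Nl ->]]].
rewrite -EFinD lee_fin.
have -> : Defs.cesaro x_ k - Defs.cesaro x_ l =
  (Defs.cesaro x_ k - x) - (Defs.cesaro x_ l - x).
  by rewrite opprB addrA subrK.
apply: (le_trans (ler_normB _ _)).
have := key k Nk; have := key l Nl; lra.
Qed.

End Aux.

Unset Implicit Arguments.
Local Open Scope ereal_scope.

Theorem lemma4p4 (R : realType) (X : completeNormedModType R)
  (x_ : nat -> X) (x : X) :
  weak_cvg x_ x -> cca x_ <= 2%:E * wu x_ x.
Proof.
move=> wc.
have W0 : 0 <= wu x_ x.
  by apply: le_ereal_inf_tmp => _ [e [e0 _] <-]; rewrite lee_fin ltW.
case Hw: (wu x_ x) => [w| |].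
- apply/lee_addgt0Pr => d d0.
  have fin : wu x_ x \is a fin_num by rewrite Hw.
  have d20 : (0 < d / 2)%R by rewrite divr_gt0.
  have [_ [e [e0 [n cn]] <-] elt] := lb_ereal_inf_adherent d20 fin.
  rewrite -/(wu x_ x) Hw -EFinD lte_fin in elt.
  apply: (le_trans (cca_le wc e0 cn)).
  rewrite -EFinM -EFinD lee_fin; lra.
- by rewrite mulry gtr0_sg // mul1e leey.
- by rewrite Hw in W0.
Qed.
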